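(* There is an absolute constant $C>0$ such that for every $e_1$-gate graph $G$, $\gamma\big(A(G^{\rm SL})-e_1\big)\ge C\,\gamma\big(A(G)-e_1\big)$.
   Context: For a positive semidefinite matrix $M$, $\gamma(M)$ denotes its smallest nonzero eigenvalue. Let $g_0$ be a fixed $128$-vertex simple graph with vertices labeled $(z,t,j)$, $z\in\{0,1\}$, $t\in[8]$, $j\in\{0,\dots,7\}$, whose adjacency matrix $A(g_0)$ has smallest eigenvalue $e_1=-1-3\sqrt2$, with the corresponding eigenspace having orthonormal basis $|\psi_{z,0}\rangle=\frac{1}{\sqrt8}\big(|z\rangle(|1\rangle+|3\rangle+|5\rangle+|7\rangle)+H|z\rangle(|2\rangle+|8\rangle)+HT|z\rangle(|4\rangle+|6\rangle)\big)|\omega\rangle$ and $|\psi_{z,1}\rangle=|\psi_{z,0}\rangle^*$, where $H=\frac1{\sqrt2}\begin{pmatrix}1&1\\1&-1\end{pmatrix}$, $T=\mathrm{diag}(1,e^{i\pi/4})$, $|\omega\rangle=\frac1{\sqrt8}\sum_{j=0}^7 e^{-i\pi j/4}|j\rangle$. A gate diagram consists of $R$ diagram elements $q\in[R]$, each with a label $U_q\in\{1,H,HT\}$ and node set $\{(q,z,t): z\in\{0,1\},\ t\in\{1,3\}\cup T(U_q)\}$, where $T(H)=\{2,8\}$, $T(HT)=\{4,6\}$, $T(1)=\{5,7\}$; together with a set $\mathcal S$ of nodes and a set $\mathcal E$ of unordered pairs of nodes, such that each node belongs to at most one element of $\mathcal S$ or pair of $\mathcal E$. The associated gate graph $G$ has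 vertices $(q,z,t,j)$ and adjacency matrix $A(G)=1_q\otimes A(g_0)+h_{\mathcal S}+h_{\mathcal E}$, with $h_{\mathcal S}=\sum_{(q,z,t)\in\mathcal S}|q,z,t\rangle\langle q,z,t|\otimes 1_j$ and $h_{\mathcal E}=\sum_{\{(q,z,t),(q',z',t')\}\in\mathcal E}(|q,z,t\rangle+|q',z',t'\rangle)(\langle q,z,t|+\langle q',z',t'|)\otimes 1_j$. $G$ is an $e_1$-gate graph if the smallest eigenvalue of $A(G)$ equals $e_1$. Let $\mathcal N=\{(q,z,t,j): (q,z,t)\notin\mathcal S \text{ and } (q,z,t) \text{ belongs to no pair in } \mathcal E\}$, $\Pi_{\mathcal N}=\sum_{v\in\mathcal N}|v\rangle\langle v|$, and $\Pi_+=|+\rangle\langle+|$ with $|+\rangle=\frac1{\sqrt2}(|0\rangle+|1\rangle)$. The graph $G^{\rm SL}$ has vertex set $V(G)\times\{0,1\}$ and adjacency matrix $A(G^{\rm SL})=A(G)\otimes 1_d+2\,\Pi_{\mathcal N}\otimes\Pi_+$. *)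

(* Defs.v *)
From HB Require Import structures.
From mathcomp Require Import all_boot all_order all_algebra all_field.
Set Implicit Arguments. Unset Strict Implicit. Unset Printing Implicit Defensive.
Import Order.TTheory GRing.Theory Num.Theory.
Local Open Scope ring_scope.

(* Matrices indexed by an arbitrary finite type V, transported to 'M_#|V|
   via the canonical enumeration of V. *)
Definition fmx (V : finType) (f : V -> V -> algC) : 'M[algC]_#|V| :=
  \matrix_(i, j) f (enum_val i) (enum_val j).

Definition smallest_eig n (M : 'M[algC]_n) (a : algC) : Prop :=
  eigenvalue M a /\ forall b, eigenvalue M b -> a <= b.

Definition is_gamma n (M : 'M[algC]_n) (g : algC) : Prop :=
  [/\ eigenvalue M g, g != 0 & forall b, eigenvalue M b -> b != 0 -> g <= b].

Definition e1 : algC := -1 - 3%:R * sqrtC 2%:R.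

(* vertices (z,t,j) of g_0; the label t in [8] = {1,...,8} is encoded by
   t' : 'I_8 with t = t'.+1 *)
Definition V0 : finType := ('I_2 * 'I_8 * 'I_8)%type.

(* zeta = e^{i pi/4} *)
Definition zeta : algC := (1 + 'i) / sqrtC 2%:R.

Definition Hent (a b : 'I_2) : algC :=
  (if (val a == 1%N) && (val b == 1%N) then -1 else 1) / sqrtC 2%:R.
Definition Tent (b : 'I_2) : algC := if val b == 1%N then zeta else 1.
Definition HTent (a b : 'I_2) : algC := Hent a b * Tent b.

Definition omega (j : 'I_8) : algC := (zeta^* ^+ j) / sqrtC 8%:R.

Definition psi0 (z : 'I_2) (v : V0) : algC :=
  let: (z', t, j) := v in
  let tl := (val t).+1 in
  let c := if tl \in [:: 1; 3; 5; 7]%N then (if z' == z then 1 else 0)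
           else if tl \in [:: 2; 8]%N then Hent z' z
           else HTent z' z in
  c / sqrtC 8%:R * omega j.

Definition psi1 (z : 'I_2) (v : V0) : algC := (psi0 z v)^*.

Definition psi_mx : 'M[algC]_(4, #|V0|) :=
  \matrix_(k < 4, i < #|V0|) let v := enum_val i in
     match val k with
     | 0 => psi0 0 v | 1 => psi0 1 v | 2 => psi1 0 v | _ => psi1 1 v end.

Definition adjmx (V : finType) (e : rel V) : 'M[algC]_#|V| :=
  fmx (fun x y => (e x y)%:R).

Inductive glabel := L1 | LH | LHT.

(* the set {1,3} u T(U), on labels t in [8] *)
Definition tset (u : glabel) : seq nat :=
  match u with
  | LH => [:: 1; 3; 2; 8]%N
  | LHT => [:: 1; 3; 4; 6]%N
  | L1 => [:: 1; 3; 5; 7]%N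
  end.

(* triples (q,z,t); t encoded as 'I_8 with label (val t).+1 *)
Definition Trip (R : nat) : finType := ('I_R * 'I_2 * 'I_8)%type.

Definition is_node R (U : 'I_R -> glabel) (x : Trip R) : bool :=
  let: (q, z, t) := x in ((val t).+1 \in tset (U q)).

Definition gate_diagram R (U : 'I_R -> glabel) (S : {set Trip R})
    (E : {set {set Trip R}}) : Prop :=
  [/\ forall x, x \in S -> is_node U x,
      forall e, e \in E -> #|e| = 2%N /\ (forall x, x \in e -> is_node U x)
    & forall x, ((x \in S) + #|[set e in E | x \in e]| <= 1)%N].

Definition VG (R : nat) : finType := ('I_R * V0)%type.

Definition trip_of R (v : VG R) : Trip R :=
  let: (q, (z, t, j)) := v in (q, z, t).
Definition jof R (v : VG R) : 'I_8 := let: (q, (z, t, j)) := v in j.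

(* A(G) = 1_q (x) A(g0) + h_S + h_E *)
Definition AG_fun R (A0 : rel V0) (S : {set Trip R}) (E : {set {set Trip R}})
    (v w : VG R) : algC :=
  (if v.1 == w.1 then (A0 v.2 w.2)%:R else 0)
  + (if jof v == jof w then
       (if (trip_of v == trip_of w) && (trip_of v \in S) then 1 else 0)
       + #|[set e in E | (trip_of v \in e) && (trip_of w \in e)]|%:R
     else 0).

Definition AG R (A0 : rel V0) S E : 'M[algC]_#|VG R| := fmx (@AG_fun R A0 S E).

Definition inN R (S : {set Trip R}) (E : {set {set Trip R}}) (v : VG R) : bool :=
  (trip_of v \notin S) && [forall e in E, trip_of v \notin e].

Definition VSL (R : nat) : finType := (VG R * 'I_2)%type.

(* A(G^SL) = A(G) (x) 1_2 + 2 Pi_N (x) Pi_+, Pi_+ = |+><+| *)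
Definition ASL_fun R (A0 : rel V0) S E (v w : VSL R) : algC :=
  (if v.2 == w.2 then AG_fun A0 S E v.1 w.1 else 0)
  + (if (v.1 == w.1) && inN S E v.1 then 2%:R * (1 / 2%:R) else 0).

Definition ASL R (A0 : rel V0) S E : 'M[algC]_#|VSL R| :=
  fmx (@ASL_fun R A0 S E).

(* Main.v *)
Require Import Defs.
From HB Require Import structures.
From mathcomp Require Import all_boot all_order all_algebra all_field.
From mathcomp Require Import ring.
Import Order.TTheory GRing.Theory Num.Theory Num.Def.
Set Implicit Arguments. Unset Strict Implicit. Unset Printing Implicit Defensive.
Local Open Scope ring_scope.

Definition adj {m n} (M : 'M[algC]_(m, n)) : 'M[algC]_(n, m) := map_mx conjC (trmx M).

Lemma adjM m n p (A : 'M[algC]_(m, n)) (B : 'M[algC]_(n, p)) :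
  adj (A *m B) = adj B *m adj A.
Proof. by rewrite /adj trmx_mul map_mxM. Qed.

Lemma adjK m n (A : 'M[algC]_(m, n)) : adj (adj A) = A.
Proof. by apply/matrixP=> i j; rewrite !mxE conjCK. Qed.

Definition form {n} (x : 'rV[algC]_n) (A : 'M[algC]_n) := (x *m A *m adj x) 0 0.
Definition dot {n} (x y : 'rV[algC]_n) := (x *m adj y) 0 0.

Lemma dotE n (x y : 'rV[algC]_n) : dot x y = \sum_i x 0 i * (y 0 i)^*.
Proof. by rewrite /dot mxE; apply: eq_bigr => i _; rewrite !mxE. Qed.

Lemma spec_facts n (A : 'M[algC]_n) : adj A = A ->
  exists P (d : 'rV[algC]_n), [/\ adj P *m P = 1%:M, P *m adj P = 1%:M,
     A = adj P *m diag_mx d *m P & forall i, eigenvalue A (d 0 i)].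
Proof.
move=> hA.
have nA : A \is normalmx by apply/normalmxP; rewrite -/(adj A) hA.
have /orthomx_spectralP eA := nA.
set P := spectralmx A in eA; set d := spectral_diag A in eA.
have Pu : P \is unitarymx by apply: spectral_unitarymx.
have PP : P *m adj P = 1%:M by apply/unitarymxP.
have iP : invmx P = adj P by rewrite invmx_unitary.
have PuP : P \in unitmx by apply: unitarymx_unit.
have PP' : adj P *m P = 1%:M by rewrite -iP mulVmx.
exists P, d; split => //; first by rewrite -iP.
move=> i; apply/eigenvalueP; exists (row i P).
  rewrite -row_mul eA iP !mulmxA PP mul1mx mul_diag_mx.
  by apply/rowP => j; rewrite !mxE.
apply/negP => /eqP h.
have : row i P *m adj P = 0 by rewrite h mul0mx.
rewrite -row_mul PP => /rowP/(_ i); rewrite !mxE eqxx /= => /eqP.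
by rewrite oner_eq0.
Qed.

Lemma form_spec n (A P : 'M[algC]_n) (d : 'rV[algC]_n) (x : 'rV[algC]_n) :
  adj P *m P = 1%:M -> P *m adj P = 1%:M -> A = adj P *m diag_mx d *m P ->
  form x A = \sum_i d 0 i * ((x *m adj P) 0 i * ((x *m adj P) 0 i)^*).
Proof.
move=> h1 h2 ->; rewrite /form.
have -> : x *m (adj P *m diag_mx d *m P) *m adj x =
   (x *m adj P) *m diag_mx d *m adj (x *m adj P).
  by rewrite adjM adjK !mulmxA.
rewrite mxE; apply: eq_bigr => i _.
rewrite mul_mx_diag !mxE; ring.
Qed.

Lemma dot_mulP n (c0 c1 P : 'M[algC]_n) (u v : 'rV[algC]_n) :
  P *m adj P = 1%:M -> dot (u *m P) (v *m P) = dot u v.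
Proof. by move=> h; rewrite /dot adjM mulmxA -(mulmxA u) h mulmx1. Qed.

Lemma psd_decomp n (A : 'M[algC]_n) (g : algC) : adj A = A -> 0 <= g ->
  (forall b, eigenvalue A b -> b != 0 -> g <= b) ->
  forall x, exists a b, [/\ x = a + b, a *m A = 0, dot a b = 0 &
                          g * dot b b <= form x A].
Proof.
move=> hA g0 hg x.
have [P [d [h1 h2 eA hd]]] := spec_facts hA.
set c := x *m adj P.
pose c0 : 'rV_n := \row_i (if d 0 i == 0 then c 0 i else 0).
pose c1 : 'rV_n := \row_i (if d 0 i == 0 then 0 else c 0 i).
exists (c0 *m P), (c1 *m P); split.
- rewrite -mulmxDl.
  have -> : c0 + c1 = c by apply/rowP => i; rewrite !mxE; case: ifP; rewrite ?addr0 ?add0r.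
  by rewrite /c -mulmxA h1 mulmx1.
- rewrite eA !mulmxA -(mulmxA c0) h2 mulmx1.
  have -> : c0 *m diag_mx d = 0.
    apply/rowP => i; rewrite mul_mx_diag !mxE.
    by case: ifP => [/eqP->|]; rewrite ?mulr0 ?mul0r.
  by rewrite mul0mx.
- rewrite dot_mulP // dotE big1 // => i _; rewrite !mxE.
  by case: ifP; rewrite ?mul0r // rmorph0 mulr0.
- rewrite dot_mulP // dotE (form_spec x h1 h2 eA) mulr_sumr.
  apply: ler_sum => i _; rewrite !mxE -/c.
  case: eqP => [->|/eqP nz]; first by rewrite !mul0r mulr0.
  rewrite ler_wpM2r //; [exact: mul_conjC_ge0 | exact: hg].
Qed.

Lemma psd_zero n (A : 'M[algC]_n) : adj A = A ->
  (forall b, eigenvalue A b -> 0 <= b) ->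
  forall x, 0 <= form x A /\ (form x A = 0 -> x *m A = 0).
Proof.
move=> hA hpos x.
have [P [d [h1 h2 eA hd]]] := spec_facts hA.
set c := x *m adj P.
have ge : forall i, 0 <= d 0 i * (c 0 i * (c 0 i)^*).
  by move=> i; apply: mulr_ge0; [exact: hpos | exact: mul_conjC_ge0].
rewrite (form_spec x h1 h2 eA) -/c; split; first by apply: sumr_ge0.
move=> /psumr_eq0P h0.
have hz : forall i, d 0 i * c 0 i = 0.
  move=> i; have := h0 (fun i _ => ge i) i isT.
  move/eqP; rewrite mulf_eq0 => /orP[] /eqP; first by move=> ->; rewrite mul0r.
  by move/eqP; rewrite mul_conjC_eq0 => /eqP ->; rewrite mulr0.
have -> : x = c *m P by rewrite /c -mulmxA h1 mulmx1.
rewrite eA !mulmxA -(mulmxA c) h2 mulmx1.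
have -> : c *m diag_mx d = 0 by rewrite mul_mx_diag; apply/rowP => i; rewrite [LHS]mxE [RHS]mxE mulrC hz.
by rewrite mul0mx.
Qed.

Section FunMx.
Variable V : finType.

Definition vf (x : 'rV[algC]_#|V|) (v : V) : algC := x 0 (enum_rank v).
Definition fv (f : V -> algC) : 'rV[algC]_#|V| := \row_i f (enum_val i).

Lemma sum_enum (F : 'I_#|V| -> algC) : \sum_i F i = \sum_v F (enum_rank v).
Proof. by rewrite (reindex enum_rank) //; apply: onW_bij; apply: enum_rank_bij. Qed.

Lemma vfK x : fv (vf x) = x.
Proof. by apply/rowP => i; rewrite !mxE /vf enum_valK. Qed.

Lemma fvK f v : vf (fv f) v = f v.
Proof. by rewrite /vf mxE enum_rankK. Qed.

Lemma fmx_mul (f : V -> algC) (A : V -> V -> algC) :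
  fv f *m fmx A = fv (fun w => \sum_v f v * A v w).
Proof.
apply/rowP => j; rewrite !mxE sum_enum; apply: eq_bigr => v _.
by rewrite !mxE enum_rankK.
Qed.

Lemma dot_fv (f g : V -> algC) : dot (fv f) (fv g) = \sum_v f v * (g v)^*.
Proof. by rewrite dotE sum_enum; apply: eq_bigr => v _; rewrite !mxE enum_rankK. Qed.

Lemma form_fv (f : V -> algC) (A : V -> V -> algC) :
  form (fv f) (fmx A) = \sum_w (\sum_v f v * A v w) * (f w)^*.
Proof.
rewrite /form fmx_mul -/(dot _ (fv f)) dot_fv; apply: eq_bigr => w _.
by [].
Qed.

Lemma adj_fmx (A : V -> V -> algC) : adj (fmx A) = fmx (fun v w => (A w v)^*).
Proof. by apply/matrixP => i j; rewrite !mxE. Qed.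

Lemma fv_inj (f g : V -> algC) : fv f = fv g -> forall v, f v = g v.
Proof. by move=> h v; rewrite -(fvK f) -(fvK g) h. Qed.

Lemma fv0 : fv (fun _ => 0) = 0.
Proof. by apply/rowP => i; rewrite !mxE. Qed.

Lemma fvD f g : fv f + fv g = fv (fun v => f v + g v).
Proof. by apply/rowP => i; rewrite !mxE. Qed.

Lemma fvZ a f : a *: fv f = fv (fun v => a * f v).
Proof. by apply/rowP => i; rewrite !mxE. Qed.

Lemma fv_eq0 f : (fv f == 0) = [forall v, f v == 0].
Proof.
apply/eqP/forallP => [h v|h]; first by rewrite -(fvK f) h /vf mxE.
by apply/rowP => i; rewrite !mxE; apply/eqP.
Qed.

End FunMx.

Lemma fmx_subC (V : finType) (f : V -> V -> algC) c :
  fmx f - c%:M = fmx (fun v w => f v w - (v == w)%:R * c).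
Proof.
apply/matrixP => i j; rewrite !mxE (inj_eq enum_val_inj) mulr_natl.
by case: eqP.
Qed.

Definition s2 : algC := sqrtC 2%:R.
Lemma s2_gt0 : 0 < s2. Proof. by rewrite /s2 sqrtC_gt0 ltr0n. Qed.
Lemma s2_neq0 : s2 != 0. Proof. by rewrite gt_eqF // s2_gt0. Qed.
Lemma s2_sq : s2 ^+ 2 = 2%:R. Proof. by rewrite /s2 sqrtCK. Qed.
Lemma s2_conj : s2^* = s2.
Proof. by apply: conj_Creal; apply: gtr0_real; apply: s2_gt0. Qed.
Lemma e1_real : e1 \is Num.real.
Proof.
rewrite /e1 rpredB ?rpredN ?rpred1 // rpredM ?rpred_nat //.
by apply: gtr0_real; apply: s2_gt0.
Qed.
Lemma e1_conj : e1^* = e1.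
Proof. exact: conj_Creal e1_real. Qed.

Lemma cjD (a b : algC) : (a + b)^* = a^* + b^*. Proof. exact: rmorphD. Qed.
Lemma cjB (a b : algC) : (a - b)^* = a^* - b^*. Proof. exact: rmorphB. Qed.
Lemma cjM (a b : algC) : (a * b)^* = a^* * b^*. Proof. exact: rmorphM. Qed.
Lemma cjN (a : algC) : (- a)^* = - a^*. Proof. exact: rmorphN. Qed.
Lemma cjn n : (n%:R : algC)^* = n%:R. Proof. exact: rmorph_nat. Qed.
Lemma cj0 : (0 : algC)^* = 0. Proof. exact: rmorph0. Qed.
Lemma cj1 : (1 : algC)^* = 1. Proof. exact: rmorph1. Qed.
Lemma cjV (a : algC) : (a^-1)^* = (a^*)^-1. Proof. exact: fmorphV. Qed.
Lemma cjX (a : algC) n : (a ^+ n)^* = (a^*) ^+ n. Proof. exact: rmorphXn. Qed.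
Lemma cjsum (I : finType) (F : I -> algC) : (\sum_i F i)^* = \sum_i (F i)^*.
Proof. exact: rmorph_sum. Qed.

Lemma natb0 (b : bool) : ~~ b -> (b%:R : algC) = 0. Proof. by case: b. Qed.

Lemma rank1_form (V K : finType) (phi : K -> V -> bool) (f : V -> algC) :
  \sum_w (\sum_v f v * \sum_k (phi k v && phi k w)%:R) * (f w)^* =
  \sum_k (\sum_v f v * (phi k v)%:R) * (\sum_w f w * (phi k w)%:R)^*.
Proof.
transitivity (\sum_w \sum_v \sum_k f v * (phi k v)%:R * (f w * (phi k w)%:R)^*).
  apply: eq_bigr => w _; rewrite mulr_suml; apply: eq_bigr => v _.
  rewrite mulr_sumr mulr_suml; apply: eq_bigr => k _.
  rewrite rmorphM rmorph_nat.
  by case: (phi k v); case: (phi k w); rewrite /= ?mulr0 ?mul0r ?mulr1.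
rewrite exchange_big /=; under eq_bigr => v _ do rewrite exchange_big /=.
rewrite exchange_big /=; apply: eq_bigr => k _.
rewrite rmorph_sum mulr_suml; apply: eq_bigr => v _.
by rewrite mulr_sumr.
Qed.

Lemma rank1_form_ge0 (V K : finType) (phi : K -> V -> bool) (f : V -> algC) :
  0 <= \sum_k (\sum_v f v * (phi k v)%:R) * (\sum_w f w * (phi k w)%:R)^*.
Proof. by apply: sumr_ge0 => k _; apply: mul_conjC_ge0. Qed.

Section Main.
Variables (A0 : rel V0) (R : nat) (S : {set Trip R}) (E : {set {set Trip R}}).
Hypothesis A0sym : symmetric A0.

Definition A0f (v w : V0) : algC := (A0 v w)%:R - (v == w)%:R * e1.
Definition Hf (v w : VG R) : algC :=
  if jof v == jof w then
    (if (trip_of v == trip_of w) && (trip_of v \in S) then 1 else 0)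
    + #|[set e in E | (trip_of v \in e) && (trip_of w \in e)]|%:R
  else 0.
Definition Mf (v w : VG R) : algC := AG_fun A0 S E v w - (v == w)%:R * e1.

Lemma Mf_split v w : Mf v w = (v.1 == w.1)%:R * A0f v.2 w.2 + Hf v w.
Proof.
rewrite /Mf /AG_fun /A0f -/(Hf v w).
case: v => q v; case: w => q' w /=; rewrite xpair_eqE.
by case: (q == q'); rewrite /= ?mul1r ?mul0r ?add0r ?mulr0 ?subr0; ring.
Qed.

Lemma Hf_sym v w : Hf v w = Hf w v.
Proof.
rewrite /Hf eq_sym; case: (jof w == jof v) => //; congr (_ + _).
  by rewrite eq_sym; case: eqP => // ->.
by congr (_ %:R); apply: eq_card => e; rewrite !inE (andbC (_ \in e)).
Qed.

Lemma Hf_conj v w : (Hf v w)^* = Hf v w.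
Proof.
rewrite /Hf; case: ifP => _; last by rewrite rmorph0.
by rewrite rmorphD rmorph_nat; case: ifP; rewrite ?rmorph0 ?rmorph1.
Qed.

Lemma A0f_conj v w : (A0f w v)^* = A0f v w.
Proof.
by rewrite /A0f cjB cjM !cjn e1_conj A0sym eq_sym.
Qed.

Lemma Mf_conj v w : (Mf w v)^* = Mf v w.
Proof.
by rewrite !Mf_split cjD cjM cjn A0f_conj Hf_conj Hf_sym eq_sym.
Qed.


Definition HK := (('I_8 * Trip R) + ('I_8 * {set Trip R}))%type.
Definition hphi (k : HK) (v : VG R) : bool :=
  match k with
  | inl k => (k.2 \in S) && (trip_of v == k.2) && (jof v == k.1)
  | inr k => (k.2 \in E) && (trip_of v \in k.2) && (jof v == k.1)
  end.

Lemma Hf_sum v w : Hf v w = \sum_(k : HK) (hphi k v && hphi k w)%:R.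
Proof.
rewrite big_sumType /= /Hf.
case: eqP => [ejw|nejw]; last first.
  have hw : (jof w == jof v) = false by apply/eqP => h; apply: nejw; rewrite h.
  rewrite !big1 ?addr0 // => [[j e]|[j s]] _ /=.
    apply: natb0; apply/negP => /and3P[/andP[_ h1] _ h2].
    by apply: nejw; rewrite (eqP h1) (eqP h2).
  apply: natb0; apply/negP => /and3P[/andP[_ h1] _ h2].
  by apply: nejw; rewrite (eqP h1) (eqP h2).
have e1' : \sum_(k : 'I_8 * Trip R) (hphi (inl k) v && hphi (inl k) w)%:R = (
   (if (trip_of v == trip_of w) && (trip_of v \in S) then 1 else 0) : algC).
  rewrite (bigD1 (jof v, trip_of v)) //= big1 ?addr0.
    rewrite -ejw !eqxx /= !andbT [trip_of w == _]eq_sym; by case: (_ \in S); case: (_ == _).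
  move=> [j s] /= ne; apply: natb0; apply/negP => /and3P[/andP[/andP[_ /eqP h1] /eqP h2] _ _].
  by move: ne; rewrite h1 h2 eqxx.
have e2' : \sum_(k : 'I_8 * {set Trip R}) (hphi (inr k) v && hphi (inr k) w)%:R =
   (#|[set e in E | (trip_of v \in e) && (trip_of w \in e)]|%:R : algC).
  rewrite -(pair_bigA _ (fun j e => (hphi (inr (j, e)) v && hphi (inr (j, e)) w)%:R)) /=.
  rewrite (bigD1 (jof v)) //= [X in _ + X]big1 ?addr0; last first.
    move=> j ne; apply: big1 => e _; apply: natb0.
    by apply/negP => /and3P[/andP[_ /eqP h] _ _]; move: ne; rewrite h eqxx.
  rewrite -sumr_const [RHS]big_mkcond /=; apply: eq_bigr => e _; rewrite !inE -ejw !eqxx !andbT.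
  by case: (e \in E); case: (_ \in e); case: (_ \in e).
by rewrite -e1' -e2'.
Qed.

Lemma Hform_ge0 (f : VG R -> algC) : 0 <= \sum_w (\sum_v f v * Hf v w) * (f w)^*.
Proof.
under eq_bigr => w _ do under eq_bigr => v _ do rewrite Hf_sum.
rewrite rank1_form; exact: rank1_form_ge0.
Qed.


Lemma sum_VG (F : VG R -> algC) : \sum_w F w = \sum_q \sum_w0 F (q, w0).
Proof. by rewrite pair_bigA; apply: eq_bigr => -[]. Qed.

Definition blk (f : VG R -> algC) (q : 'I_R) (v0 : V0) := f (q, v0).

Lemma form_split (f : VG R -> algC) :
  \sum_w (\sum_v f v * Mf v w) * (f w)^* =
  \sum_q (\sum_w0 (\sum_v0 blk f q v0 * A0f v0 w0) * (blk f q w0)^*)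
  + \sum_w (\sum_v f v * Hf v w) * (f w)^*.
Proof.
transitivity (\sum_w (\sum_v f v * ((v.1 == w.1)%:R * A0f v.2 w.2)) * (f w)^*
   + \sum_w (\sum_v f v * Hf v w) * (f w)^*).
  rewrite -big_split /=; apply: eq_bigr => w _; rewrite -mulrDl -big_split /=; congr (_ * _).
  by apply: eq_bigr => v _; rewrite Mf_split mulrDr.
congr (_ + _).
rewrite sum_VG; apply: eq_bigr => q _; apply: eq_bigr => w0 _; congr (_ * _).
rewrite sum_VG (bigD1 q) //= [X in _ + X]big1 ?addr0.
  by apply: eq_bigr => v0 _; rewrite eqxx mul1r.
move=> q' nq; apply: big1 => w0' _.
by rewrite (negbTE nq) mul0r mulr0.
Qed.

End Main.



Definition zc : algC := zeta^*.
Lemma zcE : zc = (1 - 'i) / s2.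
Proof. by rewrite /zc /zeta cjM cjV cjD cj1 conjCi -/s2 s2_conj. Qed.

Lemma hmul (a b : algC) : (a / s2) * (b / s2) = a * b / 2%:R.
Proof. by rewrite mulf_div -expr2 s2_sq. Qed.

Lemma two_neq0 : (2%:R : algC) != 0. Proof. by rewrite pnatr_eq0. Qed.

Lemma zeta_zc : zeta * zc = 1.
Proof.
rewrite zcE /zeta -/s2 hmul.
have -> : (1 + 'i) * (1 - 'i) = 1 - 'i ^+ 2 :> algC by ring.
rewrite sqrCi; apply: (mulIf two_neq0); rewrite mulfVK ?two_neq0 //; ring.
Qed.

Lemma zc2 : zc ^+ 2 = - 'i.
Proof.
rewrite zcE expr2 hmul.
have -> : (1 - 'i) * (1 - 'i) = 1 - 2%:R * 'i + 'i ^+ 2 :> algC by ring.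
rewrite sqrCi; apply: (mulIf two_neq0); rewrite mulfVK ?two_neq0 //; ring.
Qed.

Lemma zc4 : zc ^+ 4 = -1.
Proof. by rewrite (exprM zc 2 2) zc2 sqrrN sqrCi. Qed.

Lemma zc8 : zc ^+ 8 = 1.
Proof. by rewrite (exprM zc 4 2) zc4 sqrrN expr1n. Qed.

Lemma zc_neq0 : zc != 0.
Proof. by apply/eqP => h; have := zeta_zc; rewrite h mulr0 => /eqP; rewrite eq_sym oner_eq0. Qed.

Lemma zc7 : zc ^+ 7 = zeta.
Proof.
apply: (mulIf zc_neq0); rewrite -exprSr zc8; exact/esym/zeta_zc.
Qed.

Definition t5 : 'I_8 := @Ordinal 8 4 isT.
Definition t2 : 'I_8 := @Ordinal 8 1 isT.
Definition j0 : 'I_8 := @Ordinal 8 0 isT.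
Definition j4 : 'I_8 := @Ordinal 8 4 isT.
Definition jm (y : 'I_2) (j : 'I_8) : 'I_8 := @Ordinal 8 ((j + 8 - y) %% 8) (@ltn_pmod _ 8 isT).

Definition s8 : algC := sqrtC 8%:R.

Lemma omegaE j : omega j = zc ^+ j / s8.
Proof. by []. Qed.

Lemma tent_omega z j : Tent z * omega j = omega (jm z j).
Proof.
rewrite /Tent !omegaE /jm /=; case: z => [[|[|//]] hz] /=.
  by rewrite mul1r subn0 modnDr modn_small.
rewrite mulrA; congr (_ / _); rewrite expr_mod ?zc8 //.
by rewrite -zc7 -exprD -addnBA // addnC.
Qed.

Lemma Hent_conj a b : (Hent a b)^* = Hent a b.
Proof.
rewrite /Hent cjM cjV -/s2 s2_conj; congr (_ / _).
by case: ifP; rewrite ?cjN cj1.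
Qed.

Lemma hsum z' z : \sum_y Hent z' y * Hent y z = (z' == z)%:R.
Proof.
rewrite !big_ord_recl big_ord0 addr0 /Hent !hmul.
case: z' => [[|[|//]] h1]; case: z => [[|[|//]] h2] /=;
  apply: (mulIf two_neq0); rewrite ?mul0r -?mulrDl ?mulfVK ?two_neq0 //; ring.
Qed.

Lemma psi0E z z' t j : psi0 z ((z', t), j) =
  (if (val t).+1 \in [:: 1; 3; 5; 7]%N then (if z' == z then 1 else 0)
   else if (val t).+1 \in [:: 2; 8]%N then Hent z' z else HTent z' z)
  / sqrtC 8%:R * omega j.
Proof. by []. Qed.

Lemma sum_delta (F : 'I_2 -> algC) z :
  \sum_y F y * (if y == z then 1 else 0) = F z.
Proof.
rewrite (bigD1 z) //= eqxx mulr1 big1 ?addr0 // => y ne.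
by rewrite (negbTE ne) mulr0.
Qed.

Lemma R1_0 z z' t j : (val t).+1 \in [:: 1; 3; 5; 7]%N ->
  psi0 z ((z', t), j) = psi0 z ((z', t5), j).
Proof. by move=> h; rewrite !psi0E h. Qed.

Lemma sum_delta2 (F : 'I_2 -> algC) z K :
  \sum_y F y * ((if y == z then 1 else 0) * K) = F z * K.
Proof.
rewrite (bigD1 z) //= eqxx mul1r big1 ?addr0 // => y ne.
by rewrite (negbTE ne) mul0r mulr0.
Qed.

Lemma R2_0 z z' t j : (val t).+1 \in [:: 1; 3; 5; 7]%N = false ->
  (val t).+1 \in [:: 2; 8]%N ->
  psi0 z ((z', t), j) = \sum_y Hent z' y * psi0 z ((y, t5), j).
Proof.
move=> h1 h2; rewrite psi0E h1 h2.
under eq_bigr => y _ do rewrite psi0E /= -mulrA.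
by rewrite sum_delta2 mulrA.
Qed.

Lemma R3_0 z z' t j : (val t).+1 \in [:: 1; 3; 5; 7]%N = false ->
  (val t).+1 \in [:: 2; 8]%N = false ->
  psi0 z ((z', t), j) = \sum_y Hent z' y * psi0 z ((y, t5), jm y j).
Proof.
move=> h1 h2; rewrite psi0E h1 h2.
rewrite (bigD1 z) //= [X in _ + X]big1 ?addr0; last first.
  by move=> y ne; rewrite (negbTE ne) !mul0r mulr0.
rewrite eqxx /HTent -tent_omega; ring.
Qed.

Lemma R4_0 z z' j :
  psi0 z ((z', t5), j) = \sum_y Hent z' y * psi0 z ((y, t2), j).
Proof.
rewrite psi0E /=.
under eq_bigr => y _ do rewrite mulrA mulrA.
rewrite -mulr_suml -mulr_suml hsum; congr (_ / _ * _).
by case: eqP.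
Qed.

Lemma R5_0 z z' t : psi0 z ((z', t), j4) = - psi0 z ((z', t), j0).
Proof. by rewrite !psi0E !omegaE /= zc4 expr0; ring. Qed.

Definition psik (k : 'I_4) (v : V0) : algC :=
  match val k with 0 => psi0 0 v | 1 => psi0 1 v | 2 => psi1 0 v | _ => psi1 1 v end.

Lemma psi_mxE k i : psi_mx k i = psik k (enum_val i).
Proof. by rewrite mxE. Qed.

Lemma lift_rel (v : V0) (h : 'I_2 -> algC) (w : 'I_2 -> V0) :
  (forall z, psi0 z v = \sum_y h y * psi0 z (w y)) ->
  (forall y, (h y)^* = h y) ->
  forall k, psik k v = \sum_y h y * psik k (w y).
Proof.
move=> H hr k; rewrite /psik; case: (val k) => [|[|[|_]]]; rewrite ?H //;
 rewrite /psi1 H cjsum; apply: eq_bigr => y _; by rewrite cjM hr.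
Qed.

Lemma lift_rel1 (v w : V0) (a : algC) :
  (forall z, psi0 z v = a * psi0 z w) -> a^* = a ->
  forall k, psik k v = a * psik k w.
Proof.
move=> H hr k; rewrite /psik; case: (val k) => [|[|[|_]]]; rewrite ?H //;
 by rewrite /psi1 H cjM hr.
Qed.

Definition inspan (f : V0 -> algC) :=
  exists c : 'I_4 -> algC, forall v, f v = \sum_k c k * psik k v.

Lemma lin2 f (v : V0) (h : 'I_2 -> algC) (w : 'I_2 -> V0) : inspan f ->
  (forall k, psik k v = \sum_y h y * psik k (w y)) -> f v = \sum_y h y * f (w y).
Proof.
move=> [c hc] H; rewrite hc.
under eq_bigr => k _ do rewrite H mulr_sumr.
rewrite exchange_big /=; apply: eq_bigr => y _.
rewrite hc mulr_sumr; apply: eq_bigr => k _; ring.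
Qed.

Lemma lin1 f (v w : V0) (a : algC) : inspan f ->
  (forall k, psik k v = a * psik k w) -> f v = a * f w.
Proof.
move=> [c hc] H; rewrite !hc mulr_sumr; apply: eq_bigr => k _; rewrite H; ring.
Qed.

Lemma R1 f z' t j : inspan f -> (val t).+1 \in [:: 1; 3; 5; 7]%N ->
  f ((z', t), j) = f ((z', t5), j).
Proof.
move=> hf ht; rewrite -[RHS]mul1r; apply: lin1 => //.
apply: lift_rel1 => [z|]; [by rewrite mul1r R1_0 | exact: cj1].
Qed.

Lemma R2 f z' t j : inspan f -> (val t).+1 \in [:: 1; 3; 5; 7]%N = false ->
  (val t).+1 \in [:: 2; 8]%N ->
  f ((z', t), j) = \sum_y Hent z' y * f ((y, t5), j).
Proof.
move=> hf h1 h2; apply: (lin2 (w := fun y => ((y, t5), j))) => //.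
by apply: lift_rel => [z|y]; [exact: R2_0 | exact: Hent_conj].
Qed.

Lemma R3 f z' t j : inspan f -> (val t).+1 \in [:: 1; 3; 5; 7]%N = false ->
  (val t).+1 \in [:: 2; 8]%N = false ->
  f ((z', t), j) = \sum_y Hent z' y * f ((y, t5), jm y j).
Proof.
move=> hf h1 h2; apply: (lin2 (w := fun y => ((y, t5), jm y j))) => //.
by apply: lift_rel => [z|y]; [exact: R3_0 | exact: Hent_conj].
Qed.

Lemma R4 f z' j : inspan f ->
  f ((z', t5), j) = \sum_y Hent z' y * f ((y, t2), j).
Proof.
move=> hf; apply: (lin2 (w := fun y => ((y, t2), j))) => //.
by apply: lift_rel => [z|y]; [exact: R4_0 | exact: Hent_conj].
Qed.

Lemma R5 f z' t : inspan f -> f ((z', t), j4) = - f ((z', t), j0).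
Proof.
move=> hf; rewrite -mulN1r; apply: lin1 => //.
apply: lift_rel1 => [z|]; [by rewrite mulN1r R5_0 | by rewrite cjN cj1].
Qed.

Definition sq (x : algC) := x * x^*.
Lemma sq_ge0 x : 0 <= sq x. Proof. exact: mul_conjC_ge0. Qed.
Lemma sqM a b : sq (a * b) = sq a * sq b. Proof. by rewrite /sq cjM; ring. Qed.
Lemma sqD_le x y : sq (x + y) <= 2%:R * (sq x + sq y).
Proof.
rewrite -subr_ge0.
have -> : 2%:R * (sq x + sq y) - sq (x + y) = sq (x - y) by rewrite /sq cjD cjB; ring.
exact: sq_ge0.
Qed.
Lemma sq_Hent a b : sq (Hent a b) = 2%:R^-1.
Proof.
by rewrite /sq Hent_conj /Hent hmul; case: ifP => _; rewrite ?mulN1r ?opprK !mul1r.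
Qed.

Lemma pair_sq z (g : 'I_2 -> algC) :
  sq (\sum_y Hent z y * g y) <= \sum_y sq (g y).
Proof.
rewrite !big_ord_recl !big_ord0 !addr0.
apply: le_trans (sqD_le _ _) _; rewrite !(sqM (Hent _ _)) !sq_Hent -mulrDr mulrA mulfV ?two_neq0 //.
by rewrite mul1r.
Qed.

Definition nonnode (u : glabel) (w : V0) := ~~ ((val w.1.2).+1 \in tset u).
Definition Q (u : glabel) (f : V0 -> algC) := \sum_(w | nonnode u w) sq (f w).

Lemma Q_single u f w : nonnode u w -> sq (f w) <= Q u f.
Proof.
move=> hw; rewrite /Q (bigD1 w) //= lerDl; apply: sumr_ge0 => ? _; exact: sq_ge0.
Qed.

Lemma Q_pair u f t' (jy : 'I_2 -> 'I_8) : ~~ ((val t').+1 \in tset u) ->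
  \sum_y sq (f ((y, t'), jy y)) <= Q u f.
Proof.
move=> ht; rewrite !big_ord_recl big_ord0 addr0 /Q.
rewrite (bigD1 ((ord0, t'), jy ord0)) //= (bigD1 ((lift ord0 ord0, t'), jy (lift ord0 ord0))) /=.
  by rewrite lerD2l lerDl; apply: sumr_ge0 => ? _; exact: sq_ge0.
by rewrite /nonnode /= ht.
Qed.

Lemma pair_bound u f z t' (jy : 'I_2 -> 'I_8) : ~~ ((val t').+1 \in tset u) ->
  sq (\sum_y Hent z y * f ((y, t'), jy y)) <= Q u f.
Proof. by move=> ht; apply: le_trans (pair_sq _ _) (Q_pair _ _ ht). Qed.

Lemma pt_bound u f v : inspan f -> sq (f v) <= Q u f.
Proof.
move=> hf; case: v => [[z t] j].
case: u; case: t => [[|[|[|[|[|[|[|[|//]]]]]]]] ht];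
first [ by apply: Q_single
      | rewrite (@R1 f z _ j hf) //; first [ by apply: Q_single
            | by rewrite (@R4 f z j hf); apply: (pair_bound f z (fun=> j)) ]
      | by rewrite (@R2 f z _ j hf) //; apply: (pair_bound f z (fun=> j))
      | by rewrite (@R3 f z _ j hf) //; apply: (pair_bound f z (fun y => jm y j)) ].
Qed.

Lemma card_V0 : #|V0| = 128%N.
Proof. by rewrite !card_prod !card_ord. Qed.

Lemma blk_bound u f : inspan f -> \sum_v sq (f v) <= 128%:R * Q u f.
Proof.
move=> hf; apply: (@le_trans _ _ (\sum_(v : V0) Q u f)); first by apply: ler_sum => v _; apply: pt_bound.
by rewrite sumr_const card_V0 mulr_natl.
Qed.



Lemma natr_neq0 n : (n.+1%:R : algC) != 0. Proof. by rewrite pnatr_eq0. Qed.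

Lemma final_ineq (g gS A B X : algC) : 0 <= g -> g <= 16%:R -> 0 <= A -> 0 <= B ->
  X = A + B -> g * B <= gS * X -> A / 128%:R - 2%:R * B <= gS * X -> 0 < X ->
  g / 8192%:R <= gS.
Proof.
move=> g0 g16 A0 B0 hX h1 h2 X0.
have gSX0 : 0 <= gS * X by apply: le_trans h1; apply: mulr_ge0.
have key : 2%:R * (gS * X) - g * X / 4096%:R =
   (gS * X - g * B) + (g / 32%:R) * (gS * X - (A / 128%:R - 2%:R * B))
   + (1 - g / 32%:R) * (gS * X) + g * B * (3839%:R / 4096%:R).
  by rewrite hX; field; rewrite ?natr_neq0.
rewrite -(ler_pM2r X0) -(@ler_pM2l _ 2%:R) ?ltr0n //.
have -> : 2%:R * (g / 8192%:R * X) = g * X / 4096%:R by field; rewrite ?natr_neq0.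
rewrite -subr_ge0 key.
have g32 : g / 32%:R <= 1.
  by rewrite ler_pdivrMr ?ltr0n // mul1r (le_trans g16) // ler_nat.
apply: addr_ge0; last by apply: mulr_ge0; [apply: mulr_ge0 | apply: divr_ge0; rewrite ?ler0n].
apply: addr_ge0; last by apply: mulr_ge0; rewrite // subr_ge0.
apply: addr_ge0; first by rewrite subr_ge0.
by apply: mulr_ge0; [apply: divr_ge0; rewrite ?ler0n | rewrite subr_ge0].
Qed.

Lemma eig_shift n (A : 'M[algC]_n) e b :
  eigenvalue (A - e%:M) b = eigenvalue A (b + e).
Proof.
rewrite /eigenvalue /eigenspace.
have -> : A - e%:M - b%:M = A - (b + e)%:M.
  by apply/matrixP => i j; rewrite !mxE mulrnDl opprD addrA [_ - _ *+ _ - _]addrAC.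
by [].
Qed.

Lemma shift_pos n (A : 'M[algC]_n) e : smallest_eig A e ->
  forall b, eigenvalue (A - e%:M) b -> 0 <= b.
Proof.
move=> [_ hm] b; rewrite eig_shift => /hm.
by rewrite -subr_ge0 addrK.
Qed.

Section Main2.
Variables (A0 : rel V0) (R : nat) (U : 'I_R -> glabel) (S : {set Trip R})
  (E : {set {set Trip R}}).
Hypotheses (A0sym : symmetric A0) (A0irr : irreflexive A0)
  (A0min : smallest_eig (adjmx A0) e1)
  (A0eig : (eigenspace (adjmx A0) e1 == psi_mx)%MS)
  (hgd : gate_diagram U S E).

Lemma A0mx : adjmx A0 - e1%:M = fmx (A0f A0).
Proof. by rewrite /adjmx fmx_subC. Qed.

Lemma A0_adj : adj (fmx (A0f A0)) = fmx (A0f A0).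
Proof. by rewrite adj_fmx; apply/matrixP => i j; rewrite !mxE A0f_conj. Qed.

Lemma ker_inspan (a : VG R -> algC) :
  (forall w, \sum_v a v * Mf A0 S E v w = 0) -> forall q, inspan (blk a q).
Proof.
move=> ha q.
have hF : \sum_w (\sum_v a v * Mf A0 S E v w) * (a w)^* = 0.
  by apply: big1 => w _; rewrite ha mul0r.
rewrite form_split // in hF.
have psd := psd_zero A0_adj (fun b => eq_ind _ (fun M => eigenvalue M b -> 0 <= b) (@shift_pos _ _ _ A0min b) _ A0mx).
pose Bq q := \sum_w0 (\sum_v0 blk a q v0 * A0f A0 v0 w0) * (blk a q w0)^*.
have Bq_ge0 : forall q, 0 <= Bq q.
  by move=> q'; have [h _] := psd (fv (blk a q')); rewrite form_fv in h.
have /eqP := hF; rewrite paddr_eq0 ?Hform_ge0 //; last by apply: sumr_ge0 => q' _; exact: Bq_ge0.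
case/andP => /eqP hB _.
have hq : Bq q = 0 by apply: (psumr_eq0P (fun q' _ => Bq_ge0 q') hB).
have [_ hz] := psd (fv (blk a q)); rewrite form_fv in hz.
have {}hz := hz hq.
have hs : (fv (blk a q) <= psi_mx)%MS.
  by rewrite -(eqmxP A0eig) /eigenspace; apply/sub_kermxP; rewrite A0mx.
case/submxP: hs => D hD.
exists (fun k => D 0 k) => v.
have := congr1 (fun M : 'rV_#|V0| => M 0 (enum_rank v)) hD.
rewrite /= [LHS]mxE enum_rankK mxE => ->.
by apply: eq_bigr => k _; rewrite psi_mxE enum_rankK.
Qed.


Lemma Mmx : AG A0 S E - e1%:M = fmx (Mf A0 S E).
Proof. by rewrite /AG fmx_subC. Qed.

Lemma M_adj : adj (fmx (Mf A0 S E)) = fmx (Mf A0 S E).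
Proof. by rewrite adj_fmx; apply/matrixP => i j; rewrite !mxE Mf_conj. Qed.

Definition SLf (v w : VSL R) : algC := ASL_fun A0 S E v w - (v == w)%:R * e1.

Lemma SLfE v0 s w0 s' : SLf (v0, s) (w0, s') =
  (s == s')%:R * Mf A0 S E v0 w0 + ((v0 == w0) && inN S E v0)%:R.
Proof.
rewrite /SLf /ASL_fun /Mf /= xpair_eqE.
have -> : 2%:R * (1 / 2%:R) = 1 :> algC by field; rewrite ?natr_neq0.
case: (s == s'); case: (v0 == w0); case: (inN S E v0); rewrite /= ?mul1r ?mul0r ?add0r ?addr0 ?subr0 //; ring.
Qed.

Lemma sum_VSL (F : VSL R -> algC) : \sum_v F v = \sum_v0 \sum_s F (v0, s).
Proof. by rewrite pair_bigA; apply: eq_bigr => -[]. Qed.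

Definition o1 : 'I_2 := lift ord0 ord0.

Lemma sum_I2 (F : 'I_2 -> algC) : \sum_s F s = F ord0 + F o1.
Proof. by rewrite !big_ord_recl big_ord0 addr0. Qed.

Lemma I2_cases (s : 'I_2) : s = ord0 \/ s = o1.
Proof. by case: s => [[|[|//]] h]; [left | right]; apply: val_inj. Qed.

Lemma split_eig gSL : eigenvalue (ASL A0 S E - e1%:M) gSL ->
  (exists2 xm : VG R -> algC, [exists v, xm v != 0] &
      forall w, \sum_v xm v * Mf A0 S E v w = gSL * xm w) \/
  (exists2 xp : VG R -> algC, [exists v, xp v != 0] &
      forall w, \sum_v xp v * Mf A0 S E v w + 2%:R * ((inN S E w)%:R * xp w) = gSL * xp w).
Proof.
case/eigenvalueP => u hu nu.
rewrite /ASL fmx_subC -/SLf -(vfK u) fmx_mul fvZ in hu.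
have he := fv_inj hu.
set f := vf u in he nu.
have he2 : forall w0 s', \sum_v0 f (v0, s') * Mf A0 S E v0 w0 +
    (inN S E w0)%:R * (f (w0, ord0) + f (w0, o1)) = gSL * f (w0, s').
  move=> w0 s'; rewrite -(he (w0, s')) sum_VSL.
  under [RHS]eq_bigr => v0 _ do under eq_bigr => s _ do rewrite SLfE mulrDr.
  under [RHS]eq_bigr => v0 _ do rewrite big_split /=.
  rewrite big_split /=; congr (_ + _).
    apply: eq_bigr => v0 _; rewrite (bigD1 s') //= eqxx mul1r big1 ?addr0 // => s ne.
    by rewrite (negbTE ne) mul0r mulr0.
  rewrite (bigD1 w0) //= [X in _ = _ + X]big1 ?addr0; last first.
    by move=> v0 ne; apply: big1 => s _; rewrite (negbTE ne) mulr0.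
  by rewrite eqxx /= sum_I2; ring.
pose xm v0 := f (v0, ord0) - f (v0, o1).
pose xp v0 := f (v0, ord0) + f (v0, o1).
have hm : forall w, \sum_v xm v * Mf A0 S E v w = gSL * xm w.
  move=> w; rewrite /xm; under eq_bigr do rewrite mulrBl.
  rewrite sumrB (canRL (addrK _) (he2 w ord0)) (canRL (addrK _) (he2 w o1)); ring.
have hp : forall w, \sum_v xp v * Mf A0 S E v w + 2%:R * ((inN S E w)%:R * xp w) = gSL * xp w.
  move=> w; rewrite /xp; under eq_bigr do rewrite mulrDl.
  rewrite big_split /= (canRL (addrK _) (he2 w ord0)) (canRL (addrK _) (he2 w o1)); ring.
case: (boolP [exists v, xm v != 0]) => hm0; first by left; exists xm.
right; exists xp => //.
apply: contraNT nu => hp0; rewrite -(vfK u) fv_eq0; apply/forallP => -[v0 s].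
move: hm0 hp0; rewrite !negb_exists => /forallP /(_ v0) hm0 /forallP /(_ v0) hp0.
move: hm0 hp0; rewrite !negbK /xm /xp subr_eq0 => /eqP h1 /eqP.
rewrite -/f h1 -mulr2n => /eqP; rewrite mulrn_eq0 /= => /eqP h0.
by apply/eqP; case: (I2_cases s) => ->; rewrite ?h1 h0.
Qed.


Lemma decompM g : 0 <= g ->
  (forall b, eigenvalue (fmx (Mf A0 S E)) b -> b != 0 -> g <= b) ->
  forall x : VG R -> algC, exists af bf : VG R -> algC,
   [/\ forall v, x v = af v + bf v,
       forall w, \sum_v af v * Mf A0 S E v w = 0,
       \sum_v af v * (bf v)^* = 0 &
       g * \sum_v bf v * (bf v)^* <= \sum_w (\sum_v x v * Mf A0 S E v w) * (x w)^*].
Proof.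
move=> g0 hg x.
have [a [b [h1 h2 h3 h4]]] := psd_decomp M_adj g0 hg (fv x).
exists (vf a), (vf b); split.
- by move=> v; rewrite -(fvK x v) h1 /vf mxE.
- rewrite -(vfK a) fmx_mul -fv0 in h2; exact: fv_inj h2.
- by rewrite -(vfK a) -(vfK b) dot_fv in h3.
- by rewrite -(vfK b) dot_fv form_fv in h4.
Qed.

Lemma bool_if (b : bool) : (if b then 1 else 0 : algC) = b%:R.
Proof. by case: b. Qed.

Lemma AGdiag v : AG_fun A0 S E v v <= 1.
Proof.
rewrite /AG_fun !eqxx A0irr /= add0r.
case: hgd => _ _ /(_ (trip_of v)) h3.
have -> : [set e in E | (trip_of v \in e) && (trip_of v \in e)] = [set e in E | trip_of v \in e].
  by apply/setP => e; rewrite !inE andbb.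
rewrite bool_if -natrD; have -> : (1 : algC) = 1%:R by []. by rewrite ler_nat.
Qed.

Lemma AGoff v w : jof v != jof w -> AG_fun A0 S E v w <= 1.
Proof.
move=> hj; rewrite /AG_fun (negbTE hj) addr0.
by case: ifP => _; rewrite ?ler01 // -[X in _ <= X]/(1%:R) ler_nat leq_b1.
Qed.


Lemma s2_le2 : s2 <= 2%:R.
Proof.
rewrite /s2 -[X in _ <= X](@sqrCK _ 2%:R) ?ler0n // ler_sqrtC ?nnegrE ?ler0n //.
  by rewrite expr2 ler_peMr ?ler0n ?ler1n.
by rewrite exprn_ge0 ?ler0n.
Qed.

Lemma g_le16 g : 0 <= g ->
  (forall b, eigenvalue (fmx (Mf A0 S E)) b -> b != 0 -> g <= b) ->
  eigenvalue (fmx (Mf A0 S E)) g -> g <= 16%:R.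
Proof.
move=> g0 hg /eigenvalueP [x _ nx].
rewrite -(vfK x) fv_eq0 negb_forall in nx; case/existsP: nx => -[q [[z t] j]] _.
pose v1 : VG R := (q, ((z, t), j0)).
pose v2 : VG R := (q, ((z, t), j4)).
have v12 : (v2 == v1) = false by rewrite /v1 /v2 !xpair_eqE /= !andbF.
pose yf (w : VG R) : algC := ((w == v1) || (w == v2))%:R.
have sum_y : forall F : VG R -> algC, \sum_w yf w * F w = F v1 + F v2.
  move=> F; rewrite (bigD1 v1) //= (bigD1 v2) /=; last by rewrite v12.
  rewrite /yf eqxx v12 /= eqxx big1 ?addr0 ?mul1r // => w /andP[n1 n2].
  by rewrite (negbTE n1) (negbTE n2) mul0r.
have yf1 : yf v1 = 1 by rewrite /yf eqxx.
have yf2 : yf v2 = 1 by rewrite /yf eqxx orbT.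
have [af [bf [hx hk hab hg']]] := decompM g0 hg yf.
have hsp := ker_inspan hk q.
have hR5 : af v2 = - af v1 by exact: (R5 z t hsp).
have yc : forall w, (yf w)^* = yf w by move=> w; rewrite cjn.
have B2 : \sum_v bf v * (bf v)^* = 2%:R.
  have e0 : \sum_w yf w * (af w)^* = 0 by rewrite sum_y hR5 cjN addrN.
  have e2 : \sum_w yf w * (yf w)^* = 2%:R.
    by rewrite sum_y !yc yf1 yf2 -mulr2n.
  rewrite -e2; under [RHS]eq_bigr => w _ do rewrite {2}hx cjD mulrDr.
  rewrite big_split /= e0 add0r.
  under [RHS]eq_bigr => w _ do rewrite hx mulrDl.
  by rewrite big_split /= hab add0r.
have F1 : \sum_w (\sum_v yf v * Mf A0 S E v w) * (yf w)^*
   = Mf A0 S E v1 v1 + Mf A0 S E v2 v1 + (Mf A0 S E v1 v2 + Mf A0 S E v2 v2).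
  under eq_bigr => w _ do rewrite sum_y yc mulrC.
  by rewrite sum_y.
rewrite F1 B2 in hg'.
have d1 : Mf A0 S E v1 v1 <= 1 - e1 by rewrite /Mf eqxx mul1r lerD2r AGdiag.
have d2 : Mf A0 S E v2 v2 <= 1 - e1 by rewrite /Mf eqxx mul1r lerD2r AGdiag.
have o12 : Mf A0 S E v1 v2 <= 1 by rewrite /Mf eq_sym v12 mul0r subr0 AGoff.
have o21 : Mf A0 S E v2 v1 <= 1 by rewrite /Mf v12 mul0r subr0 AGoff.
have hsum := lerD (lerD d1 o21) (lerD o12 d2).
have h1 := le_trans hg' hsum.
have hs := s2_le2.
have h2 : 1 - e1 + 1 + (1 + (1 - e1)) = 6%:R + 6%:R * s2 by rewrite /e1 -/s2; ring.
rewrite h2 in h1.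
have h3 : 6%:R + 6%:R * s2 <= 16%:R * 2%:R :> algC.
  apply: le_trans (lerD (lexx 6%:R) (ler_wpM2l (ler0n _ 6) hs)) _.
  by rewrite -!natrM -natrD ler_nat.
by rewrite -(@ler_pM2r _ 2%:R) ?ltr0n // (le_trans h1 h3).
Qed.


Definition nnG (w : VG R) : bool := nonnode (U w.1) w.2.

Lemma nnG_inN w : nnG w -> inN S E w.
Proof.
case: w => q [[z t] j]; rewrite /nnG /nonnode /inN /= => hn.
case: hgd => hS hE _.
apply/andP; split.
  by apply/negP => /hS; rewrite /is_node /= (negbTE hn).
apply/forallP => e; apply/implyP => he; apply/negP => /((hE e he).2).
by rewrite /is_node /= (negbTE hn).
Qed.

Lemma NA_bound (af : VG R -> algC) : (forall q, inspan (blk af q)) ->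
  \sum_w sq (af w) <= 128%:R * \sum_w (nnG w)%:R * sq (af w).
Proof.
move=> hsp; rewrite sum_VG (sum_VG (fun w => (nnG w)%:R * sq (af w))) mulr_sumr.
apply: ler_sum => q _; apply: le_trans (blk_bound (U q) (hsp q)) _.
rewrite /Q big_mkcond /= ler_wpM2l ?ler0n //; apply: ler_sum => w0 _.
by rewrite /nnG /=; case: (nonnode _ _); rewrite ?mul1r ?mul0r.
Qed.

Lemma xp_case g gSL (xp : VG R -> algC) : 0 <= g ->
  (forall b, eigenvalue (fmx (Mf A0 S E)) b -> b != 0 -> g <= b) -> g <= 16%:R ->
  [exists v, xp v != 0] ->
  (forall w, \sum_v xp v * Mf A0 S E v w + 2%:R * ((inN S E w)%:R * xp w) = gSL * xp w) ->
  g / 8192%:R <= gSL.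
Proof.
move=> g0 hg g16 /existsP [v0 nv0] heq.
have [af [bf [hx hk hab hg']]] := decompM g0 hg xp.
set F := \sum_w (\sum_v xp v * Mf A0 S E v w) * (xp w)^* in hg'.
set N := \sum_w (inN S E w)%:R * sq (xp w).
set X := \sum_w sq (xp w).
set A := \sum_w sq (af w).
set B := \sum_w sq (bf w).
have hE : F + 2%:R * N = gSL * X.
  rewrite /F /N /X mulr_sumr mulr_sumr -big_split /=; apply: eq_bigr => w _.
  transitivity ((gSL * xp w) * (xp w)^*); last by rewrite /sq mulrA.
  by rewrite -(heq w) /sq; ring.
have hX : X = A + B.
  have hba : \sum_w bf w * (af w)^* = 0.
    by rewrite -[LHS]conjCK cjsum; under eq_bigr => w _ do rewrite cjM conjCK mulrC; rewrite hab cj0.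
  rewrite /X /A /B -big_split /=.
  transitivity (\sum_w (sq (af w) + sq (bf w)) + (\sum_w af w * (bf w)^* + \sum_w bf w * (af w)^*)).
    rewrite -!big_split /=; apply: eq_bigr => w _; rewrite hx /sq cjD; ring.
  by rewrite hab hba !addr0.
have A0' : 0 <= A by apply: sumr_ge0 => w _; exact: sq_ge0.
have B0 : 0 <= B by apply: sumr_ge0 => w _; exact: sq_ge0.
have N0 : 0 <= N by apply: sumr_ge0 => w _; apply: mulr_ge0; rewrite ?ler0n ?sq_ge0.
have F0 : 0 <= F by apply: le_trans hg'; apply: mulr_ge0.
have h1 : g * B <= gSL * X by rewrite -hE (le_trans hg') // lerDl mulr_ge0 ?ler0n.
have hNA : (\sum_w (nnG w)%:R * sq (af w)) / 2%:R - B <= N.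
  apply: le_trans (_ : _ <= (\sum_w (nnG w)%:R * sq (af w)) / 2%:R - \sum_w (nnG w)%:R * sq (bf w)) _.
    rewrite lerD2l lerN2; apply: ler_sum => w _.
    by case: (nnG w); rewrite ?mul1r ?mul0r ?sq_ge0.
  rewrite mulr_suml -sumrB; apply: ler_sum => w _.
  case hn: (nnG w); last by rewrite !mul0r subr0 mulr_ge0 ?ler0n ?sq_ge0.
  rewrite (nnG_inN hn) !mul1r lerBlDr.
  have h := sqD_le (xp w) (- bf w).
  have e : sq (- bf w) = sq (bf w) by rewrite /sq cjN mulrNN.
  have hx' : xp w + - bf w = af w by rewrite hx addrK.
  rewrite e hx' in h.
  by rewrite ler_pdivrMr ?ltr0n // mulrC.
have h2 : A / 128%:R - 2%:R * B <= gSL * X.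
  rewrite -hE; apply: ler_wpDl F0 _.
  have hA := NA_bound (ker_inspan hk).
  apply: le_trans (_ : _ <= 2%:R * ((\sum_w (nnG w)%:R * sq (af w)) / 2%:R - B)) _; last first.
    by rewrite ler_wpM2l ?ler0n.
  rewrite mulrBr lerD2r mulrCA mulfV ?two_neq0 // mulr1.
  by rewrite ler_pdivrMr ?ltr0n // mulrC.
have X0 : 0 < X.
  rewrite /X (bigD1 v0) //= ltr_wpDr ?mul_conjC_gt0 //.
  by apply: sumr_ge0 => w _; exact: sq_ge0.
exact: (final_ineq g0 g16 A0' B0 hX h1 h2 X0).
Qed.

End Main2.



Theorem lemma2 (A0 : rel V0) (A0sym : symmetric A0) (A0irr : irreflexive A0)
    (A0min : smallest_eig (adjmx A0) e1)
    (A0eig : (eigenspace (adjmx A0) e1 == psi_mx)%MS) :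
  exists C : algC, 0 < C /\
    forall (R : nat) (U : 'I_R -> glabel) (S : {set Trip R})
           (E : {set {set Trip R}}),
      gate_diagram U S E ->
      smallest_eig (AG A0 S E) e1 ->
      forall g gSL : algC,
        is_gamma (AG A0 S E - e1%:M) g ->
        is_gamma (ASL A0 S E - e1%:M) gSL ->
        C * g <= gSL.
Proof.
exists (8192%:R)^-1; split; first by rewrite invr_gt0 ltr0n.
move=> R U S E hgd hmin g gSL [eg gnz gmin] [egSL gSLnz _].
have hpos := shift_pos hmin.
rewrite (Mmx A0 S E) in eg gmin hpos.
have g0 : 0 <= g := hpos g eg.
have g16 := g_le16 A0sym A0irr A0min A0eig hgd g0 gmin eg.
rewrite mulrC.
case: (split_eig egSL) => [[xm nxm hxm] | [xp nxp hxp]]; last first.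
  exact: (xp_case A0sym A0min A0eig hgd g0 gmin g16 nxp hxp).
have eg' : eigenvalue (fmx (Mf A0 S E)) gSL.
  apply/eigenvalueP; exists (fv xm); last by rewrite fv_eq0 negb_forall.
  by rewrite fmx_mul fvZ; apply/rowP => i; rewrite !mxE hxm.
have := gmin _ eg' gSLnz.
apply: le_trans; rewrite ler_piMr // invf_le1 ?ltr0n //.
by rewrite (_ : (1 : algC) = 1%:R) // ler_nat.
Qed.
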